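(* Let $x=(x_1,\dots,x_n)$ be a stochastic vector ($x_k\ge0$, $\sum_k x_k=1$) and let $y=x_1$. Then \[ \prod_{k=1}^n(1-x_k)^{1-x_k}\ \ge\ \frac{(1-y)^{1-y}}{e^{1-y}}. \]
   Context: Convention: $0^0=1$. *)

(* Defs.v *)
From Stdlib Require Import Reals Lra Lia.
Open Scope R_scope.

(* Real power a^b with the convention 0^0 = 1 (and 0^b = 0 for b <> 0);
   for a > 0 it is exp (b * ln a). *)
Definition rpow (a b : R) : R :=
  if Req_EM_T a 0 then (if Req_EM_T b 0 then 1 else 0) else Rpower a b.

Fixpoint rsum (n : nat) (f : nat -> R) : R :=
  match n with O => 0 | S m => rsum m f + f m end.
Fixpoint rprod (n : nat) (f : nat -> R) : R :=
  match n with O => 1 | S m => rprod m f * f m end.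

(* Main.v *)
Require Import Defs.
From Stdlib Require Import Reals Lra Lia.
Open Scope R_scope.

Lemma key (t : R) : 0 <= t <= 1 -> rpow t t >= exp (t - 1).
Proof.
  intros [h0 h1]. unfold rpow.
  destruct (Req_EM_T t 0) as [e|e].
  - subst. destruct (Req_EM_T 0 0) as [_|c]; [|lra].
    replace (0-1) with (-(1)) by lra. rewrite exp_Ropp.
    assert (1 < exp 1) by (pose proof (exp_ineq1 1); lra).
    assert (/ exp 1 < 1). { apply (Rmult_lt_reg_l (exp 1)); [lra|].
      rewrite Rinv_r; lra. }
    lra.
  - unfold Rpower. assert (tp : 0 < t) by lra.
    apply Rle_ge. cut (t - 1 <= t * ln t). { intros [Hl|Hl]; [left; apply exp_increasing; exact Hl| right; rewrite Hl; reflexivity]. }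
    pose proof (exp_ineq1_le (- ln t)) as H.
    rewrite exp_Ropp, exp_ln in H by exact tp.
    assert (t * (1 + - ln t) <= t * / t) by (apply Rmult_le_compat_l; lra).
    rewrite Rinv_r in H0 by lra. nra.
Qed.

Lemma rpow_nonneg (t : R) : 0 <= rpow t t.
Proof.
  unfold rpow. destruct (Req_EM_T t 0); [destruct (Req_EM_T t 0); lra|].
  unfold Rpower. left; apply exp_pos.
Qed.

Theorem lemma5p5 (n : nat) (x : nat -> R) (hn : (1 <= n)%nat)
  (hnn : forall k, (k < n)%nat -> 0 <= x k)
  (hsum : rsum n x = 1) :
  rprod n (fun k => rpow (1 - x k) (1 - x k))
    >= rpow (1 - x 0%nat) (1 - x 0%nat) / exp (1 - x 0%nat).
Proof.
  assert (Hpos : forall m, (m <= n)%nat -> 0 <= rsum m x).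
  { induction m; simpl; intros; [lra|].
    pose proof (IHm ltac:(lia)); pose proof (hnn m ltac:(lia)); lra. }
  assert (Hmono : forall p m, (m + p <= n)%nat -> rsum m x <= rsum (m + p) x).
  { induction p; intros m Hm. rewrite Nat.add_0_r; lra.
    replace (m + S p)%nat with (S (m + p)) by lia. simpl.
    pose proof (IHp m ltac:(lia)); pose proof (hnn (m+p)%nat ltac:(lia)); lra. }
  assert (Hle1 : forall k, (k < n)%nat -> x k <= 1).
  { intros k Hk. pose proof (Hmono (n - S k)%nat (S k) ltac:(lia)).
    replace (S k + (n - S k))%nat with n in H by lia. simpl in H.
    pose proof (Hpos k ltac:(lia)). lra. }
  set (c := rpow (1 - x 0%nat) (1 - x 0%nat)).
  assert (Hind : forall m, (1 <= m <= n)%nat ->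
    rprod m (fun k => rpow (1 - x k) (1 - x k)) >= c * exp (- (rsum m x - x 0%nat))).
  { induction m; intros Hm; [lia|].
    destruct m.
    - simpl. replace (- (0 + x 0%nat - x 0%nat)) with 0 by lra. rewrite exp_0.
      unfold c; lra.
    - specialize (IHm ltac:(lia)).
      change (rprod (S (S m)) (fun k => rpow (1 - x k) (1 - x k))) with
        (rprod (S m) (fun k => rpow (1 - x k) (1 - x k)) * rpow (1 - x (S m)) (1 - x (S m))).
      change (rsum (S (S m)) x) with (rsum (S m) x + x (S m)).
      replace (- (rsum (S m) x + x (S m) - x 0%nat)) with
        (- (rsum (S m) x - x 0%nat) + (1 - x (S m) - 1)) by lra.
      rewrite exp_plus.
      pose proof (key (1 - x (S m))) as K.
      assert (0 <= x (S m) <= 1) by (split; [apply hnn|apply Hle1]; lia).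
      specialize (K ltac:(lra)).
      assert (0 <= c) by apply rpow_nonneg.
      pose proof (exp_pos (- (rsum (S m) x - x 0%nat))).
      pose proof (exp_pos (1 - x (S m) - 1)).
      apply Rle_ge. rewrite <- Rmult_assoc.
      apply Rmult_le_compat; try lra.
      apply Rmult_le_pos; lra. }
  specialize (Hind n ltac:(lia)). rewrite hsum in Hind.
  unfold Rdiv. rewrite <- exp_Ropp. exact Hind.
Qed.
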